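(* Let $H_A\cong\mathbb{C}^{d_A}$ and $H_B\cong\mathbb{C}^{d_B}$. Let $\{E^A_{\alpha,k}\}$ ($\alpha=1,\dots,N_A$, $k=1,\dots,M_A$) be an informationally complete $(N_A,M_A)$ POVM on $H_A$ with parameter $x_A$, and $\{E^B_{\beta,j}\}$ ($\beta=1,\dots,N_B$, $j=1,\dots,M_B$) an informationally complete $(N_B,M_B)$ POVM on $H_B$ with parameter $x_B$. Let $\mu,\nu\in\mathbb{R}$ and let $l$ be a positive integer. If a bipartite state $\rho_{AB}$ on $H_A\otimes H_B$ is separable, then $$\left\|\mathcal{M}^l_{\mu,\nu}(\rho_{AB})\right\|_{\mathrm{tr}}\le\sqrt{\left(l\mu^2+\frac{(d_A-1)(d_A^2+M_A^2x_A)}{d_AM_A(M_A-1)}\right)\left(l\nu^2+\frac{(d_B-1)(d_B^2+M_B^2x_B)}{d_BM_B(M_B-1)}\right)}.$$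
   Context: An $(N,M)$ POVM on $\mathbb{C}^d$ (with $M\ge 2$) consists of $N$ POVMs $\{E_{\alpha,k}\mid k=1,\dots,M\}$, $\alpha=1,\dots,N$ (each $E_{\alpha,k}\ge0$ and $\sum_k E_{\alpha,k}=I_d$), satisfying $\mathrm{tr}(E_{\alpha,k})=d/M$, $\mathrm{tr}(E_{\alpha,k}^2)=x$, $\mathrm{tr}(E_{\alpha,k}E_{\alpha,l})=\frac{d-Mx}{M(M-1)}$ for $l\ne k$, and $\mathrm{tr}(E_{\alpha,k}E_{\beta,l})=d/M^2$ for $\beta\neq\alpha$, where the parameter $x$ satisfies $\frac{d}{M^2}<x\le\min\{\frac{d^2}{M^2},\frac dM\}$. It is informationally complete if $N(M-1)=d^2-1$. A state $\rho_{AB}$ is separable if $\rho_{AB}=\sum_ip_i\rho_A^i\otimes\rho_B^i$ with $p_i\ge0$, $\sum_ip_i=1$, and $\rho_A^i,\rho_B^i$ density matrices. Notation: $\rho_A=\mathrm{tr}_B\rho_{AB}$, $\rho_B=\mathrm{tr}_A\rho_{AB}$. $\mathcal{P}(\rho_{AB})$ is the $N_AM_A\times N_BM_B$ real matrix with entry $\mathrm{tr}[(E^A_{\alpha,k}\otimes E^B_{\beta,j})\rho_{AB}]$ in row $(\alpha,k)$ and column $(\beta,j)$ (indices ordered lexicographically). $\tau\in\mathbb{R}^{N_AM_A}$ is the column vector with entries $\mathrm{tr}(E^A_{\alpha,k}\rho_A)$ and $\sigma\in\mathbb{R}^{N_BM_B}$ the column vector with entries $\mathrm{tr}(E^B_{\beta,j}\rho_B)$,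 in the same lexicographic order. $J_{l\times l}$ is the $l\times l$ all-ones matrix, and for a column vector $X$, $\omega_l(X)=(X,\dots,X)$ is the matrix with $l$ columns each equal to $X$. Define the block matrix $$\mathcal{M}^l_{\mu,\nu}(\rho_{AB})=\begin{pmatrix}\mu\nu J_{l\times l}&\mu\,\omega_l(\sigma)^T\\ \nu\,\omega_l(\tau)&\mathcal{P}(\rho_{AB})\end{pmatrix}.$$ $\|G\|_{\mathrm{tr}}=\mathrm{tr}\sqrt{G^\dagger G}$ is the trace norm. *)

(* Defs.v *)
(* Complex numbers are R[i] for an arbitrary real closed
   field R (this covers R = the real numbers). *)
From HB Require Import structures.
From mathcomp Require Import all_boot all_order all_algebra.
From mathcomp Require Import spectral.
From mathcomp Require Import complex mxtens.
Set Implicit Arguments.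
Unset Strict Implicit.
Unset Printing Implicit Defensive.
Import Order.TTheory GRing.Theory Num.Theory Num.Def.
Local Open Scope ring_scope.

Section QDefs.
Variable R : rcfType.
Local Notation C := R[i].

Definition rC (x : R) : C := (x%:C)%C.

Definition adjmx m n (A : 'M[C]_(m, n)) : 'M[C]_(n, m) := (map_mx conjC A)^T.

Definition psdmx n (A : 'M[C]_n) : Prop :=
  forall v : 'rV[C]_n, 0 <= (v *m A *m adjmx v) 0 0.

Definition density n (rho : 'M[C]_n) : Prop := psdmx rho /\ \tr rho = 1.

(* The composite space C^dA (x) C^dB is C^(dA*dB), with the lexicographic
   index (i,j) |-> i*dB + j used by mxtens ( *t = Kronecker product). *)
Definition separable dA dB (rho : 'M[C]_(dA * dB)) : Prop :=
  exists (K : nat) (p : 'I_K -> R) (rA : 'I_K -> 'M[C]_dA)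
         (rB : 'I_K -> 'M[C]_dB),
    [/\ forall i, 0 <= p i, \sum_i p i = 1,
        forall i, density (rA i), forall i, density (rB i) &
        rho = \sum_i rC (p i) *: (rA i *t rB i)].

Definition ptrB dA dB (rho : 'M[C]_(dA * dB)) : 'M[C]_dA :=
  \matrix_(i, i') \sum_(j < dB) rho (mxtens_index (i, j)) (mxtens_index (i', j)).
Definition ptrA dA dB (rho : 'M[C]_(dA * dB)) : 'M[C]_dB :=
  \matrix_(j, j') \sum_(i < dA) rho (mxtens_index (i, j)) (mxtens_index (i, j')).

Definition NMPOVM (d N M : nat) (x : R) (E : 'I_N -> 'I_M -> 'M[C]_d) : Prop :=
  [/\ (2 <= M)%N,
      d%:R / (M%:R ^+ 2) < x /\ x <= Num.min (d%:R ^+ 2 / M%:R ^+ 2) (d%:R / M%:R),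
      forall a k, psdmx (E a k) &
  [/\
      forall a, \sum_k E a k = 1%:M,
      forall a k, \tr (E a k) = rC (d%:R / M%:R),
      forall a k, \tr (E a k *m E a k) = rC x,
      forall a k l, k != l ->
        \tr (E a k *m E a l) = rC ((d%:R - M%:R * x) / (M%:R * (M%:R - 1))) &
      forall a b k l, a != b -> \tr (E a k *m E b l) = rC (d%:R / M%:R ^+ 2)]].

Definition IC_NMPOVM (d N M : nat) (x : R) (E : 'I_N -> 'I_M -> 'M[C]_d) : Prop :=
  NMPOVM x E /\ (N * (M - 1) = d ^ 2 - 1)%N.

(* trace norm  ||G||_tr = tr sqrt(G^dagger G) = sum of square roots of the
   eigenvalues of the PSD matrix G^dagger G (spectral_diag gives the
   eigenvalues of a Hermitian matrix). *)
Definition trnorm m n (G : 'M[C]_(m, n)) : C :=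
  \sum_i sqrtC (spectral_diag (adjmx G *m G) 0 i).

(* correlation matrix P(rho), row (alpha,k) <-> index alpha*MA + k *)
Definition Pmat dA dB NA MA NB MB (EA : 'I_NA -> 'I_MA -> 'M[C]_dA)
  (EB : 'I_NB -> 'I_MB -> 'M[C]_dB) (rho : 'M[C]_(dA * dB)) :
  'M[C]_(NA * MA, NB * MB) :=
  \matrix_(r, c) \tr ((EA (mxtens_unindex r).1 (mxtens_unindex r).2
                        *t EB (mxtens_unindex c).1 (mxtens_unindex c).2) *m rho).

Definition probvec d N M (E : 'I_N -> 'I_M -> 'M[C]_d) (s : 'M[C]_d) :
  'cV[C]_(N * M) :=
  \col_r \tr (E (mxtens_unindex r).1 (mxtens_unindex r).2 *m s).

Definition omega (l n : nat) (X : 'cV[C]_n) : 'M[C]_(n, l) := \matrix_(i, j) X i 0.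

Definition Mmat (l : nat) (mu nu : R) dA dB NA MA NB MB
  (EA : 'I_NA -> 'I_MA -> 'M[C]_dA) (EB : 'I_NB -> 'I_MB -> 'M[C]_dB)
  (rho : 'M[C]_(dA * dB)) : 'M[C]_(l + NA * MA, l + NB * MB) :=
  block_mx (rC (mu * nu) *: const_mx 1 : 'M[C]_(l, l))
           (rC mu *: (omega l (probvec EB (ptrA rho)))^T)
           (rC nu *: omega l (probvec EA (ptrB rho)))
           (Pmat EA EB rho).

End QDefs.

(* Main.v *)
Require Import Defs.
From HB Require Import structures.
From mathcomp Require Import all_boot all_order all_algebra.
From mathcomp Require Import spectral complex mxtens.
From mathcomp Require Import ring lra.
Import Order.TTheory GRing.Theory Num.Theory.
Set Implicit Arguments.
Unset Strict Implicit.
Local Open Scope ring_scope.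

Section Aux.
Variable R : rcfType.
Local Notation C := R[i].

Lemma adjmxE m n (A : 'M[C]_(m, n)) i j : adjmx A i j = (A j i)^*.
Proof. by rewrite !mxE. Qed.

Lemma adjmxK m n (A : 'M[C]_(m, n)) : adjmx (adjmx A) = A.
Proof. by apply/matrixP => i j; rewrite !adjmxE conjCK. Qed.

Lemma adjmx_mul m n p (A : 'M[C]_(m, n)) (B : 'M[C]_(n, p)) :
  adjmx (A *m B) = adjmx B *m adjmx A.
Proof.
apply/matrixP => i j. rewrite adjmxE !mxE rmorph_sum; apply: eq_bigr => k _.
by rewrite !mxE rmorphM mulrC.
Qed.

Lemma adjmxD m n (A B : 'M[C]_(m, n)) : adjmx (A + B) = adjmx A + adjmx B.
Proof. by apply/matrixP => i j; rewrite !mxE rmorphD. Qed.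

Lemma adjmxN m n (A : 'M[C]_(m, n)) : adjmx (- A) = - adjmx A.
Proof. by apply/matrixP => i j; rewrite !mxE rmorphN. Qed.

Lemma adjmxB m n (A B : 'M[C]_(m, n)) : adjmx (A - B) = adjmx A - adjmx B.
Proof. by rewrite adjmxD adjmxN. Qed.

Lemma adjmxZ m n c (A : 'M[C]_(m, n)) : adjmx (c *: A) = c^* *: adjmx A.
Proof. by apply/matrixP => i j; rewrite !mxE rmorphM. Qed.

Lemma adjmx1 n : adjmx (1%:M : 'M[C]_n) = 1%:M.
Proof.
by apply/matrixP => i j; rewrite !mxE conjC_nat eq_sym.
Qed.

Lemma adjmx_sum m n I (r : seq I) (F : I -> 'M[C]_(m, n)) :
  adjmx (\sum_(i <- r) F i) = \sum_(i <- r) adjmx (F i).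
Proof.
apply/matrixP => i j; rewrite adjmxE !summxE rmorph_sum.
by apply: eq_bigr => k _; rewrite !mxE.
Qed.

Lemma adjmx_tE m n (A : 'M[C]_(m, n)) : (A ^t*)%sesqui = adjmx A.
Proof. by apply/matrixP => i j; rewrite !mxE. Qed.

Definition fn m n (A : 'M[C]_(m, n)) : C := \sum_i \sum_j A i j * (A i j)^*.
Arguments fn {m n}.

Lemma fn_ge0 m n (A : 'M[C]_(m, n)) : 0 <= fn A.
Proof. by apply: sumr_ge0 => i _; apply: sumr_ge0 => j _; apply: mul_conjC_ge0. Qed.

Lemma fn_tr m n (A : 'M[C]_(m, n)) : fn A^T = fn A.
Proof. by rewrite /fn exchange_big; apply: eq_bigr => i _; apply: eq_bigr => j _; rewrite mxE. Qed.

Lemma fn_adj m n (A : 'M[C]_(m, n)) : fn (adjmx A) = fn A.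
Proof.
rewrite /fn exchange_big; apply: eq_bigr => i _; apply: eq_bigr => j _.
by rewrite !adjmxE conjCK mulrC.
Qed.

Lemma tr_adj_mul m n (A : 'M[C]_(m, n)) : \tr (adjmx A *m A) = fn A.
Proof.
rewrite /fn /mxtrace exchange_big; apply: eq_bigr => j _; rewrite mxE.
by apply: eq_bigr => i _; rewrite adjmxE mulrC.
Qed.

Lemma tr_mul_adj m n (A : 'M[C]_(m, n)) : \tr (A *m adjmx A) = fn A.
Proof. by rewrite mxtrace_mulC tr_adj_mul. Qed.

Lemma cs (I : finType) (a b : I -> C) :
  `|\sum_i a i * b i| ^+ 2 <= (\sum_i a i * (a i)^*) * (\sum_i b i * (b i)^*).
Proof.
set A := \sum_i a i * (a i)^*; set B := \sum_i b i * (b i)^*.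
set S := \sum_i a i * b i.
have A0 : 0 <= A by apply: sumr_ge0 => i _; apply: mul_conjC_ge0.
have B0 : 0 <= B by apply: sumr_ge0 => i _; apply: mul_conjC_ge0.
have [Aeq0|Aneq0] := eqVneq A 0.
  have ai0 : forall i, a i = 0.
    move=> i; apply/eqP; rewrite -mul_conjC_eq0; apply/eqP.
    by apply: (psumr_eq0P _ Aeq0) => // j _; apply: mul_conjC_ge0.
  have -> : S = 0 by rewrite /S big1 // => i _; rewrite ai0 mul0r.
  by rewrite normr0 expr0n /= mulr_ge0.
have Agt0 : 0 < A by rewrite lt_def Aneq0 A0.
have AA : A^* = A by apply: geC0_conj.
have key : \sum_i (A * b i - S * (a i)^*) * (A * b i - S * (a i)^*)^*
           = A * (A * B - S * S^*).
  have -> : \sum_i (A * b i - S * (a i)^*) * (A * b i - S * (a i)^*)^*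
     = \sum_i ((A * A) * (b i * (b i)^*) - (A * S^*) * (a i * b i)
               - (A * S) * ((a i)^* * (b i)^*) + (S * S^*) * (a i * (a i)^*)).
    apply: eq_bigr => i _; rewrite !rmorphB !rmorphM /= conjCK AA; ring.
  rewrite big_split /= !sumrB -!mulr_sumr.
  have -> : \sum_i (a i)^* * (b i)^* = S^*.
    by rewrite /S rmorph_sum; apply: eq_bigr => i _; rewrite rmorphM.
  rewrite -/A -/B -/S; ring.
have : 0 <= A * (A * B - S * S^*).
  by rewrite -key; apply: sumr_ge0 => i _; apply: mul_conjC_ge0.
rewrite pmulr_rge0 // subr_ge0 => H.
by rewrite normCK.
Qed.

Lemma cs_tr m n (X : 'M[C]_(m, n)) (Y : 'M[C]_(n, m)) :
  `|\tr (X *m Y)| ^+ 2 <= fn X * fn Y.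
Proof.
have -> : \tr (X *m Y) = \sum_(p : 'I_m * 'I_n) X p.1 p.2 * Y p.2 p.1.
  rewrite /mxtrace -(pair_bigA _ (fun i j => X i j * Y j i)) /=.
  by apply: eq_bigr => i _; rewrite mxE.
have -> : fn X = \sum_(p : 'I_m * 'I_n) X p.1 p.2 * (X p.1 p.2)^*.
  by rewrite /fn -(pair_bigA _ (fun i j => X i j * (X i j)^*)).
have -> : fn Y = \sum_(p : 'I_m * 'I_n) Y p.2 p.1 * (Y p.2 p.1)^*.
  rewrite -fn_tr /fn -(pair_bigA _ (fun i j => Y j i * (Y j i)^*)) /=.
  by apply: eq_bigr => i _; apply: eq_bigr => j _; rewrite mxE.
exact: cs.
Qed.


Local Notation ii := (@Num.imaginary C).
Definition bf n (A : 'M[C]_n) (u w : 'rV[C]_n) : C := (u *m A *m adjmx w) 0 0.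
Arguments bf {n}.

Lemma bf_delta n (A : 'M[C]_n) (i j : 'I_n) : bf A (delta_mx 0 i) (delta_mx 0 j) = A i j.
Proof.
rewrite /bf; have -> : adjmx (delta_mx 0 j : 'rV[C]_n) = delta_mx j 0.
  by apply/matrixP => a b; rewrite !mxE conjC_nat andbC.
by rewrite -rowE -colE !mxE.
Qed.

Lemma bf_exp n (A : 'M[C]_n) (u w : 'rV[C]_n) c :
  bf A (u + c *: w) (u + c *: w) =
  bf A u u + c^* * bf A u w + c * bf A w u + c * c^* * bf A w w.
Proof.
rewrite /bf adjmxD adjmxZ !mulmxDl !mulmxDr -!scalemxAl -!scalemxAr.
rewrite !mxE; ring.
Qed.

Lemma psd_entry n (A : 'M[C]_n) : psdmx A -> forall i j : 'I_n, A j i = (A i j)^*.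
Proof.
move=> psd i j.
have q u : (bf A u u)^* = bf A u u by apply: geC0_conj; apply: psd.
set ei := (delta_mx 0 i : 'rV[C]_n); set ej := (delta_mx 0 j : 'rV[C]_n).
have h1 := q (ei + 1 *: ej); have h2 := q (ei + ii *: ej).
have hi := q ei; have hj := q ej.
rewrite bf_exp !bf_delta in h1; rewrite bf_exp !bf_delta in h2.
rewrite bf_delta in hi; rewrite bf_delta in hj.
rewrite !rmorphD !rmorphM /= !rmorph1 hi hj in h1.
have cNi : (- ii)^* = ii by rewrite rmorphN /= conjCi opprK.
rewrite !rmorphD !rmorphM /= hi hj in h2. rewrite !conjCi cNi in h2.
have H : ii * (((A i j)^*) *+ 2 - (A j i) *+ 2) =
   ii * ((A i i + 1 * (A i j)^* + 1 * (A j i)^* + 1 * 1 * A j j) -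
         (A i i + 1 * A i j + 1 * A j i + 1 * 1 * A j j)) +
   ((A i i + ii * (A i j)^* + - ii * (A j i)^* + - ii * ii * A j j) -
    (A i i + - ii * A i j + ii * A j i + ii * - ii * A j j)).
  by rewrite !mulr2n; ring.
rewrite h1 h2 !subrr mulr0 addr0 in H.
move/eqP: H; rewrite mulf_eq0 (negbTE (neq0Ci _)) /= subr_eq0 => /eqP H.
have two : (2%:R : C) != 0 by rewrite pnatr_eq0.
by symmetry; apply: (mulIf two); rewrite !mulr_natr H.
Qed.

Lemma psd_herm n (A : 'M[C]_n) : psdmx A -> adjmx A = A.
Proof. by move=> psd; apply/matrixP => i j; rewrite adjmxE -psd_entry. Qed.

Section Spec.
Variables (n : nat) (H : 'M[C]_n).
Hypothesis Hh : adjmx H = H.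
Let P := spectralmx H.
Let D := spectral_diag H.

Lemma spec_unit1 : P *m adjmx P = 1%:M.
Proof. by rewrite -adjmx_tE; apply/unitarymxP/spectral_unitarymx. Qed.

Lemma spec_unit2 : adjmx P *m P = 1%:M.
Proof.
rewrite -adjmx_tE -invmx_unitary ?spectral_unitarymx //.
by rewrite mulVmx // spectral_unit.
Qed.

Lemma spec_decomp : H = adjmx P *m diag_mx D *m P.
Proof.
rewrite -adjmx_tE -invmx_unitary ?spectral_unitarymx //.
apply/orthomx_spectralP; apply/normalmxP.
by rewrite adjmx_tE Hh.
Qed.

Lemma spec_diag : P *m H *m adjmx P = diag_mx D.
Proof.
rewrite spec_decomp !mulmxA spec_unit1 mul1mx -mulmxA spec_unit1 mulmx1 //.
Qed.
End Spec.

Lemma density_fn n (s : 'M[C]_n) : density s -> fn s <= 1.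
Proof.
move=> [psd tr1].
have Hh := psd_herm psd.
set P := spectralmx s; set D := spectral_diag s.
have D0 : forall j, 0 <= D 0 j.
  move=> j; have := spec_diag Hh; rewrite -/P -/D => e.
  have -> : D 0 j = diag_mx D j j by rewrite mxE eqxx mulr1n.
  rewrite -e -(bf_delta (P *m s *m adjmx P)) /bf.
  have -> : (delta_mx 0 j : 'rV[C]_n) *m (P *m s *m adjmx P) *m adjmx (delta_mx 0 j : 'rV[C]_n)
     = ((delta_mx 0 j : 'rV[C]_n) *m P) *m s *m adjmx ((delta_mx 0 j : 'rV[C]_n) *m P).
    by rewrite adjmx_mul !mulmxA.
  exact: psd.
have trD : \sum_j D 0 j = 1.
  rewrite -tr1 (spec_decomp Hh) -/P -/D -mxtrace_diag.
  by rewrite mxtrace_mulC mulmxA (spec_unit1 s) mul1mx.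
have fnD : fn s = \sum_j D 0 j ^+ 2.
  rewrite -tr_adj_mul Hh {1 2}(spec_decomp Hh) -/P -/D.
  have -> : adjmx P *m diag_mx D *m P *m (adjmx P *m diag_mx D *m P)
          = adjmx P *m (diag_mx D *m diag_mx D) *m P.
    by rewrite !mulmxA -(mulmxA _ P) (spec_unit1 s) mulmx1.
  rewrite mxtrace_mulC mulmxA (spec_unit1 s) mul1mx mulmx_diag mxtrace_diag.
  by apply: eq_bigr => j _; rewrite mxE expr2.
rewrite fnD -(expr1n C 2) -trD expr2 mulr_suml.
apply: ler_sum => j _; rewrite expr2 mulr_sumr (bigD1 j) //= lerDl.
by apply: sumr_ge0 => k _; apply: mulr_ge0.
Qed.


Lemma sq_le (x y : C) : 0 <= x -> 0 <= y -> x ^+ 2 <= y ^+ 2 -> x <= y.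
Proof. by move=> x0 y0; rewrite (ler_pXn2r (n:=2)) // nnegrE. Qed.

Lemma trnorm_bound m n K (G : 'M[C]_(m, n)) (p : 'I_K -> C)
  (u : 'I_K -> 'cV[C]_m) (v : 'I_K -> 'cV[C]_n) (c : C) :
  (forall i, 0 <= p i) -> \sum_i p i = 1 -> 0 <= c ->
  (forall i, fn (u i) * fn (v i) <= c ^+ 2) ->
  G = \sum_i p i *: (u i *m (v i)^T) -> trnorm G <= c.
Proof.
move=> p0 p1 c0 uvc EG.
set H := adjmx G *m G.
have Hh : adjmx H = H by rewrite /H adjmx_mul adjmxK.
set P := spectralmx H; set D := spectral_diag H.
set Y := G *m adjmx P.
have YY : adjmx Y *m Y = diag_mx D.
  rewrite /Y adjmx_mul adjmxK -(spec_diag Hh) -/P /H !mulmxA //.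
have Dj : forall j, D 0 j = \sum_r (Y r j)^* * Y r j.
  move=> j; move/matrixP: YY => /(_ j j); rewrite !mxE eqxx mulr1n => <-.
  by apply: eq_bigr => r _; rewrite adjmxE.
have D0 : forall j, 0 <= D 0 j.
  by move=> j; rewrite Dj; apply: sumr_ge0 => r _; rewrite mulrC mul_conjC_ge0.
pose s j := sqrtC (D 0 j).
have s0 : forall j, 0 <= s j by move=> j; rewrite sqrtC_ge0.
have s2 : forall j, s j ^+ 2 = D 0 j by move=> j; rewrite sqrtCK.
have sc : forall j, (s j)^* = s j by move=> j; apply: geC0_conj.
have trn : trnorm G = \sum_j s j by [].
pose W := \matrix_(r, j) (Y r j / s j).
have Wc : forall r j, (W r j)^* = (Y r j)^* / s j.
  by move=> r j; rewrite mxE rmorphM fmorphV /= sc.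
have trW : trnorm G = \tr (adjmx W *m Y).
  rewrite trn /mxtrace; apply: eq_bigr => j _; rewrite mxE.
  have -> : \sum_r adjmx W j r * Y r j = D 0 j / s j.
    rewrite Dj mulr_suml; apply: eq_bigr => r _; rewrite adjmxE Wc; ring.
  rewrite -s2; have [->|sn0] := eqVneq (s j) 0; first by rewrite expr0n mul0r.
  by rewrite expr2 mulfK.
pose e := \row_j (s j ^+ 2 / s j ^+ 2).
have WW : adjmx W *m W = diag_mx e.
  apply/matrixP => j k; rewrite !mxE.
  have -> : \sum_r adjmx W j r * W r k = (adjmx Y *m Y) j k / (s j * s k).
    rewrite [(adjmx Y *m Y) j k]mxE mulr_suml; apply: eq_bigr => r _.
    rewrite !adjmxE Wc [W r k]mxE invfM; ring.
  rewrite YY !mxE; have [<-|] := eqVneq j k; last by rewrite !mulr0n mul0r.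
  by rewrite !mulr1n -s2 expr2.
have WE : W *m diag_mx e = W.
  apply/matrixP => r k; rewrite mul_mx_diag !mxE.
  have [->|sn0] := eqVneq (s k) 0; first by rewrite invr0 !(mulr0, mul0r).
  by rewrite divff ?mulr1 // expf_neq0.
set Q := W *m adjmx W.
have QQ : Q *m Q = Q by rewrite /Q mulmxA -(mulmxA W) WW WE.
have Qh : adjmx Q = Q by rewrite /Q adjmx_mul adjmxK.
have fnWu : forall w : 'cV[C]_m, fn (adjmx W *m w) <= fn w.
  move=> w; rewrite -!tr_adj_mul adjmx_mul adjmxK.
  have -> : adjmx w *m W *m (adjmx W *m w) = adjmx w *m Q *m w by rewrite /Q !mulmxA.
  rewrite -subr_ge0.
  have -> : \tr (adjmx w *m w) - \tr (adjmx w *m Q *m w)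
     = \tr (adjmx ((1%:M - Q) *m w) *m ((1%:M - Q) *m w)).
    rewrite adjmx_mul adjmxB adjmx1 Qh.
    have -> : adjmx w *m (1%:M - Q) *m ((1%:M - Q) *m w) = adjmx w *m (1%:M - Q) *m w.
      have IQ : (1%:M - Q) *m (1%:M - Q) = 1%:M - Q.
        by rewrite mulmxBl mul1mx mulmxBr mulmx1 QQ subrr subr0.
      by rewrite mulmxA -(mulmxA (adjmx w)) IQ.
    by rewrite mulmxBr mulmx1 mulmxBl -linearB.
  by rewrite tr_adj_mul fn_ge0.
have fnP : forall w : 'cV[C]_n, fn (w^T *m adjmx P) = fn w.
  move=> w; rewrite -tr_mul_adj adjmx_mul adjmxK -mulmxA (mulmxA (adjmx P)).
  by rewrite (spec_unit2 H) mul1mx tr_mul_adj fn_tr.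
have tsum : trnorm G = \sum_i p i * \tr ((v i)^T *m adjmx P *m (adjmx W *m u i)).
  rewrite trW /Y EG mulmx_suml mulmx_sumr linear_sum; apply: eq_bigr => i _.
  rewrite -scalemxAl -scalemxAr /= mxtraceZ; congr (_ * _).
  by rewrite !mulmxA -(mulmxA (adjmx W *m u i)) mxtrace_mulC !mulmxA.
have tb : forall i, `|\tr ((v i)^T *m adjmx P *m (adjmx W *m u i))| <= c.
  move=> i; apply: sq_le => //; apply: le_trans (cs_tr _ _) _.
  rewrite fnP mulrC; apply: le_trans (uvc i).
  by apply: ler_pM; rewrite ?fn_ge0 ?fnWu.
have tg0 : 0 <= trnorm G by rewrite trn; apply: sumr_ge0.
rewrite -(ger0_norm tg0) tsum; apply: le_trans (ler_norm_sum _ _ _) _.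
rewrite -[c]mul1r -p1 mulr_suml; apply: ler_sum => i _.
by rewrite normrM (ger0_norm (p0 i)); apply: ler_wpM2l.
Qed.


Lemma sum_tens N M (F : 'I_N -> 'I_M -> C) :
  \sum_(r < N * M) F (mxtens_unindex r).1 (mxtens_unindex r).2 = \sum_a \sum_k F a k.
Proof.
rewrite (reindex (@mxtens_index N M)); last first.
  by exists (@mxtens_unindex N M) => r _; [apply: mxtens_indexK | apply: mxtens_unindexK].
rewrite pair_bigA; apply: eq_bigr => p _; by rewrite mxtens_indexK.
Qed.

Lemma fn_cV m (w : 'cV[C]_m) : fn w = \sum_r w r 0 * (w r 0)^*.
Proof. by rewrite /fn; apply: eq_bigr => r _; rewrite big_ord1. Qed.

Lemma rCE (x : R) : rC x = (x%:C)%C. Proof. by []. Qed.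

Lemma frame d N M x (E : 'I_N -> 'I_M -> 'M[C]_d) (s : 'M[C]_d) :
  NMPOVM x E -> (N * (M - 1) = d ^ 2 - 1)%N -> density s ->
  fn (probvec E s) <=
  rC ((d%:R - 1) * (d%:R ^+ 2 + M%:R ^+ 2 * x) / (d%:R * M%:R * (M%:R - 1))).
Proof.
case => M2 [xlo xhi] psdE [sumE trE trEE trEEkl trEEab] IC [psds trs].
have d0 : (0 < d)%N.
  case: d {E s psdE sumE trE trEE trEEkl trEEab IC psds trs} xlo xhi => //.
  rewrite !mul0r expr0n /= mul0r => xlo.
  rewrite le_min => /andP [h _]; move: (lt_le_trans xlo h); by rewrite ltxx.
have dR0 : (0 : R) < d%:R by rewrite ltr0n.
have MR1 : (1 : R) < M%:R by rewrite ltr1n.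
have xc0 : (d%:R - M%:R * x) / (M%:R * (M%:R - 1)) <= x.
  have MM : (0 : R) < M%:R * (M%:R - 1) by apply: mulr_gt0; lra.
  rewrite ler_pdivrMr //. rewrite ltr_pdivrMr in xlo; last by apply: exprn_gt0; lra.
  nra.
set dc : C := d%:R; set Mc : C := M%:R.
have dc0 : dc != 0 by rewrite /dc pnatr_eq0 -lt0n.
have Mc0 : Mc != 0 by rewrite /Mc pnatr_eq0 -lt0n ltnW.
have Mc1 : Mc - 1 != 0.
  by rewrite /Mc subr_eq0 pnatr_eq1 neq_ltn M2 orbT.
have trEc : forall a k, \tr (E a k) = dc / Mc.
  by move=> a k; rewrite trE rCE rmorphM fmorphV /= !rmorph_nat.
have Eh : forall a k, adjmx (E a k) = E a k by move=> a k; apply: psd_herm.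
have sh : adjmx s = s by apply: psd_herm.
pose T a k := \tr (E a k *m s).
pose y a k := T a k - Mc^-1.
have sy : forall a, \sum_k y a k = 0.
  move=> a; rewrite sumrB sumr_const card_ord.
  have -> : \sum_k T a k = 1.
    by rewrite -trs -(mul1mx s) -(sumE a) mulmx_suml linear_sum.
  by rewrite -mulr_natl divff // subrr.
have syc : forall a, \sum_k (y a k)^* = 0.
  by move=> a; rewrite -rmorph_sum sy rmorph0.
set S := \sum_a \sum_k y a k * (y a k)^*.
have S0 : 0 <= S by apply: sumr_ge0 => a _; apply: sumr_ge0 => k _; apply: mul_conjC_ge0.
have Mcr : (Mc^-1)^* = Mc^-1 by rewrite fmorphV /= conjC_nat.
have fnP : fn (probvec E s) = S + N%:R / Mc.
  rewrite fn_cV.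
  rewrite (eq_bigr (fun r => T (mxtens_unindex r).1 (mxtens_unindex r).2 *
                       (T (mxtens_unindex r).1 (mxtens_unindex r).2)^*)); last first.
    by move=> r _; rewrite mxE.
  rewrite (sum_tens (fun a k => T a k * (T a k)^*)).
  have -> : \sum_a \sum_k T a k * (T a k)^* =
     \sum_a (\sum_k y a k * (y a k)^* + Mc^-1 * \sum_k y a k
             + Mc^-1 * \sum_k (y a k)^* + Mc^-1 * Mc^-1 *+ M).
    apply: eq_bigr => a _.
    have -> : Mc^-1 * Mc^-1 *+ M = \sum_(k < M) Mc^-1 * Mc^-1 by rewrite sumr_const card_ord.
    rewrite !mulr_sumr -!big_split /=.
    apply: eq_bigr => k _; rewrite /y rmorphB /= Mcr; ring.
  rewrite (eq_bigr (fun a => \sum_k y a k * (y a k)^* + Mc^-1)); last first.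
    move=> a _; rewrite sy syc !mulr0 !addr0; congr (_ + _).
    by rewrite -mulr_natr -mulrA (mulVf Mc0) mulr1.
  by rewrite big_split /= sumr_const card_ord mulr_natl.

pose cc := rC ((d%:R - M%:R * x) / (M%:R * (M%:R - 1)) : R).
pose gc := rC (d%:R / M%:R ^+ 2 : R).
have key : forall a k, \sum_b \sum_l (y b l)^* * \tr (E a k *m E b l) = (rC x - cc) * (y a k)^*.
  move=> a k; rewrite (bigD1 a) //= [X in _ + X]big1 ?addr0; last first.
    move=> b ba; rewrite (eq_bigr (fun l => (y b l)^* * gc)); last first.
      by move=> l _; rewrite trEEab // eq_sym.
    by rewrite -mulr_suml syc mul0r.
  rewrite (bigD1 k) //= trEE.
  rewrite (eq_bigr (fun l => (y a l)^* * cc)); last first.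
    by move=> l lk; rewrite trEEkl // eq_sym.
  rewrite -mulr_suml.
  have e := syc a; rewrite (bigD1 k) //= in e.
  have -> : \sum_(l | l != k) (y a l)^* = - (y a k)^*.
    by apply/eqP; rewrite -addr_eq0 addrC e.
  by rewrite /cc; ring.
pose Z := \sum_a \sum_k (y a k)^* *: E a k.
pose X := s - (dc^-1)%:M.
have trEX : forall a k, \tr (E a k *m X) = y a k.
  move=> a k; rewrite /X mulmxBr linearB /= mul_mx_scalar mxtraceZ trEc.
  by rewrite /y /T; congr (_ - _); rewrite mulrA mulVf // mul1r.
have trZX : \tr (Z *m X) = S.
  rewrite /Z mulmx_suml linear_sum /=; apply: eq_bigr => a _.
  rewrite mulmx_suml linear_sum /=; apply: eq_bigr => k _.
  by rewrite -scalemxAl mxtraceZ trEX mulrC.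
have adjZ : adjmx Z = \sum_a \sum_k y a k *: E a k.
  rewrite /Z adjmx_sum; apply: eq_bigr => a _; rewrite adjmx_sum.
  by apply: eq_bigr => k _; rewrite adjmxZ conjCK Eh.
have fnZ : fn Z = (rC x - cc) * S.
  rewrite -tr_adj_mul adjZ mulmx_suml linear_sum /= /S mulr_sumr; apply: eq_bigr => a _.
  rewrite mulmx_suml linear_sum /= mulr_sumr; apply: eq_bigr => k _.
  rewrite -scalemxAl mxtraceZ /Z mulmx_sumr linear_sum /=.
  rewrite (eq_bigr (fun b => \sum_l (y b l)^* * \tr (E a k *m E b l))); last first.
    move=> b _; rewrite mulmx_sumr linear_sum /=; apply: eq_bigr => l _.
    by rewrite -scalemxAr mxtraceZ.
  by rewrite key; ring.
have dcr : (dc^-1)^* = dc^-1 by rewrite fmorphV /= conjC_nat.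
have adjX : adjmx X = X.
  rewrite /X adjmxB sh; congr (_ - _).
  by apply/matrixP => i j; rewrite !mxE rmorphMn /= dcr eq_sym.
have fnX : fn X <= 1 - dc^-1.
  rewrite -tr_adj_mul adjX /X mulmxBl !mulmxBr mul_mx_scalar mul_scalar_mx.
  rewrite -scalar_mxM !linearB /= !mxtraceZ mxtrace_scalar trs.
  have -> : \tr (s *m s) = fn s by rewrite -tr_adj_mul sh.
  have -> : dc^-1 * dc^-1 *+ d = dc^-1 by rewrite -mulr_natr -/dc -mulrA mulVf ?mulr1.
  have := density_fn (conj psds trs); rewrite mulr1; set f := fn s => hf.
  rewrite subrr addr0.
  by rewrite lerD2r.
have xcc0 : 0 <= rC x - cc by rewrite /cc !rCE -rmorphB ler0c subr_ge0.
have dinv0 : 0 <= 1 - dc^-1.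
  rewrite subr_ge0 invf_le1; last by rewrite ltr0n.
  by rewrite ler1n.
pose K := (rC x - cc) * (1 - dc^-1).
have K0 : 0 <= K by apply: mulr_ge0.
have SS : S * S <= S * K.
  have := cs_tr Z X; rewrite trZX ger0_norm // fnZ expr2 => h.
  apply: le_trans h _; rewrite /K mulrCA mulrA; apply: ler_wpM2l.
    by apply: mulr_ge0.
  exact: fnX.
have SK : S <= K.
  have [->|Sn0] := eqVneq S 0; first exact: K0.
  by rewrite -(ler_pM2l (x := S)) // lt_def Sn0 S0.
rewrite fnP.
have -> : rC ((d%:R - 1) * (d%:R ^+ 2 + M%:R ^+ 2 * x) / (d%:R * M%:R * (M%:R - 1)))
   = K + N%:R / Mc.
  have Nc : N%:R = (dc ^+ 2 - 1) / (Mc - 1).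
    apply: (mulIf Mc1); rewrite mulfVK //.
    have := congr1 (fun n => n%:R : C) IC.
    rewrite /= natrM !natrB ?(ltnW M2) ?expn_gt0 ?d0 // natrX => ->.
    by [].
  rewrite /K /cc Nc !rCE !rmorphM !fmorphV /= !rmorphB !rmorphD !rmorphM /= ?rmorphB /= ?rmorph_nat ?rmorph1.
  rewrite -/dc -/Mc; field.
  by rewrite dc0 Mc0 Mc1.
by rewrite lerD2r.
Qed.






Lemma sum_block m1 m2 n1 n2 K (A : 'I_K -> 'M[C]_(m1, n1)) (B : 'I_K -> 'M[C]_(m1, n2))
  (D1 : 'I_K -> 'M[C]_(m2, n1)) (D2 : 'I_K -> 'M[C]_(m2, n2)) :
  \sum_i block_mx (A i) (B i) (D1 i) (D2 i) =
  block_mx (\sum_i A i) (\sum_i B i) (\sum_i D1 i) (\sum_i D2 i).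
Proof.
elim: K A B D1 D2 => [|K IH] A B D1 D2.
  by rewrite !big_ord0 block_mx0.
rewrite !big_ord_recr /= IH add_block_mx //.
Qed.

Lemma tr_tens m n (A : 'M[C]_m) (B : 'M[C]_n) : \tr (A *t B) = \tr A * \tr B.
Proof.
rewrite /mxtrace mulr_sum; apply: eq_bigr => k _.
by rewrite /tensmx mxE.
Qed.

Lemma fn_col m1 m2 (a : 'cV[C]_m1) (t : 'cV[C]_m2) : fn (col_mx a t) = fn a + fn t.
Proof.
rewrite !fn_cV sumr_add; congr (_ + _); apply: eq_bigr => i _.
  by rewrite col_mxEu.
by rewrite col_mxEd.
Qed.

Lemma rC_conj (z : R) : (rC z)^* = rC z.
Proof. by apply/eqP; rewrite -CrealE; apply/complex_realP; exists z. Qed.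

Lemma fn_constv l (z : R) : fn (rC z *: const_mx 1 : 'cV[C]_l) = rC (l%:R * z ^+ 2).
Proof.
rewrite fn_cV (eq_bigr (fun _ => rC (z ^+ 2))); last first.
  by move=> r _; rewrite !mxE mulr1 rC_conj !rCE -rmorphM /= expr2.
by rewrite sumr_const card_ord !rCE -rmorphMn /= mulr_natl.
Qed.


Lemma ptrA_sep dA dB K (c : 'I_K -> C) (rA : 'I_K -> 'M[C]_dA) (rB : 'I_K -> 'M[C]_dB) :
  (forall i, \tr (rA i) = 1) ->
  ptrA (\sum_i c i *: (rA i *t rB i)) = \sum_i c i *: rB i.
Proof.
move=> trA; apply/matrixP => j j'; rewrite mxE.
rewrite (eq_bigr (fun a => \sum_i c i * (rA i a a * rB i j j'))); last first.
  by move=> a _; rewrite summxE; apply: eq_bigr => i _; rewrite mxE tensmxE.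
rewrite exchange_big summxE; apply: eq_bigr => i _.
rewrite mxE -mulr_sumr -mulr_suml.
by have := trA i; rewrite /mxtrace => ->; rewrite mul1r.
Qed.

Lemma ptrB_sep dA dB K (c : 'I_K -> C) (rA : 'I_K -> 'M[C]_dA) (rB : 'I_K -> 'M[C]_dB) :
  (forall i, \tr (rB i) = 1) ->
  ptrB (\sum_i c i *: (rA i *t rB i)) = \sum_i c i *: rA i.
Proof.
move=> trB; apply/matrixP => j j'; rewrite mxE.
rewrite (eq_bigr (fun a => \sum_i c i * (rA i j j' * rB i a a))); last first.
  by move=> a _; rewrite summxE; apply: eq_bigr => i _; rewrite mxE tensmxE.
rewrite exchange_big summxE; apply: eq_bigr => i _.
rewrite mxE -mulr_sumr -mulr_sumr.
by have := trB i; rewrite /mxtrace => ->; rewrite mulr1.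
Qed.

Lemma probvec_sum d N M (E : 'I_N -> 'I_M -> 'M[C]_d) K (c : 'I_K -> C) (s : 'I_K -> 'M[C]_d) r :
  probvec E (\sum_i c i *: s i) r 0 = \sum_i c i * probvec E (s i) r 0.
Proof.
rewrite !mxE mulmx_sumr linear_sum /=; apply: eq_bigr => i _.
by rewrite -scalemxAr mxtraceZ mxE.
Qed.

Lemma tr_mul_sum d K (A : 'M[C]_d) (c : 'I_K -> C) (s : 'I_K -> 'M[C]_d) :
  \tr (A *m \sum_i c i *: s i) = \sum_i c i * \tr (A *m s i).
Proof.
rewrite mulmx_sumr linear_sum /=; apply: eq_bigr => i _.
by rewrite -scalemxAr mxtraceZ.
Qed.

Lemma Pmat_sep dA dB NA MA NB MB (EA : 'I_NA -> 'I_MA -> 'M[C]_dA)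
  (EB : 'I_NB -> 'I_MB -> 'M[C]_dB) K (c : 'I_K -> C) (rA : 'I_K -> 'M[C]_dA)
  (rB : 'I_K -> 'M[C]_dB) r q :
  Pmat EA EB (\sum_i c i *: (rA i *t rB i)) r q =
  \sum_i c i * (probvec EA (rA i) r 0 * probvec EB (rB i) q 0).
Proof.
rewrite !mxE mulmx_sumr linear_sum /=; apply: eq_bigr => i _.
by rewrite -scalemxAr mxtraceZ tensmx_mul tr_tens !mxE.
Qed.

End Aux.

Theorem theorem1 (R : rcfType) (dA dB NA MA NB MB : nat) (xA xB : R)
  (EA : 'I_NA -> 'I_MA -> 'M[R[i]]_dA) (EB : 'I_NB -> 'I_MB -> 'M[R[i]]_dB)
  (mu nu : R) (l : nat) (rho : 'M[R[i]]_(dA * dB)) :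
  IC_NMPOVM xA EA -> IC_NMPOVM xB EB -> (0 < l)%N ->
  density rho -> separable rho ->
  trnorm (Mmat l mu nu EA EB rho) <=
  rC (Num.sqrt
    ((l%:R * mu ^+ 2 + (dA%:R - 1) * (dA%:R ^+ 2 + MA%:R ^+ 2 * xA)
                         / (dA%:R * MA%:R * (MA%:R - 1)))
   * (l%:R * nu ^+ 2 + (dB%:R - 1) * (dB%:R ^+ 2 + MB%:R ^+ 2 * xB)
                         / (dB%:R * MB%:R * (MB%:R - 1))))).
Proof.
move=> [povA ICA] [povB ICB] l0 _ [K [p [rA [rB [p0 p1 dAi dBi rhoE]]]]].
set bA := (dA%:R - 1) * _ / _; set bB := (dB%:R - 1) * _ / _.
pose pc i := rC (p i).
pose a : 'cV[R[i]]_l := rC mu *: const_mx 1.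
pose b : 'cV[R[i]]_l := rC nu *: const_mx 1.
pose u i := col_mx a (probvec EA (rA i)).
pose v i := col_mx b (probvec EB (rB i)).
have trA : forall i, \tr (rA i) = 1 by move=> i; case: (dAi i).
have trB : forall i, \tr (rB i) = 1 by move=> i; case: (dBi i).
have pc1 : \sum_i pc i = 1 by rewrite /pc -rmorph_sum p1 rmorph1.
have rhoE' : rho = \sum_i pc i *: (rA i *t rB i) by [].
apply: (trnorm_bound (p := pc) (u := u) (v := v)).
- by move=> i; rewrite /pc rCE ler0c.
- exact: pc1.
- by rewrite rCE ler0c sqrtr_ge0.
- move=> i.
  have fu : fn (u i) <= rC (l%:R * mu ^+ 2 + bA).
    rewrite fn_col fn_constv !rCE rmorphD /= lerD2l.
    exact: frame povA ICA (dAi i).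
  have fv : fn (v i) <= rC (l%:R * nu ^+ 2 + bB).
    rewrite fn_col fn_constv !rCE rmorphD /= lerD2l.
    exact: frame povB ICB (dBi i).
  have A0 : 0 <= l%:R * mu ^+ 2 + bA.
    by rewrite -ler0c; apply: le_trans fu; apply: fn_ge0.
  have B0 : 0 <= l%:R * nu ^+ 2 + bB.
    by rewrite -ler0c; apply: le_trans fv; apply: fn_ge0.
  rewrite !rCE -rmorphXn /= sqr_sqrtr ?mulr_ge0 // rmorphM /=.
  by apply: ler_pM => //; apply: fn_ge0.
- rewrite /Mmat rhoE' ptrA_sep // ptrB_sep //.
  rewrite (eq_bigr (fun i => pc i *: block_mx (a *m b^T) (a *m (probvec EB (rB i))^T)
        (probvec EA (rA i) *m b^T) (probvec EA (rA i) *m (probvec EB (rB i))^T))); last first.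
    by move=> i _; rewrite /u /v tr_col_mx mul_col_row.
  rewrite (eq_bigr (fun i => block_mx (pc i *: (a *m b^T)) (pc i *: (a *m (probvec EB (rB i))^T))
        (pc i *: (probvec EA (rA i) *m b^T)) (pc i *: (probvec EA (rA i) *m (probvec EB (rB i))^T)))); last first.
    by move=> i _; rewrite scale_block_mx.
  rewrite sum_block; congr block_mx; apply/matrixP => r q; rewrite summxE.
  + rewrite !mxE (eq_bigr (fun k => pc k * (rC mu * rC nu))); last first.
      by move=> k _; rewrite !mxE big_ord1 !mxE !mulr1.
    by rewrite -mulr_suml pc1 mul1r mulr1 !rCE rmorphM.
  + rewrite !mxE tr_mul_sum mulr_sumr; apply: eq_bigr => k _.
    by rewrite !mxE big_ord1 !mxE; ring.
  + rewrite !mxE tr_mul_sum mulr_sumr; apply: eq_bigr => k _.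
    by rewrite !mxE big_ord1 !mxE; ring.
  + rewrite Pmat_sep; apply: eq_bigr => k _.
    by rewrite !mxE big_ord1 !mxE.
Qed.
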